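(* An instance of the UDODOSP is feasible if and only if there are integers $W^d$ for $0\le d\le D$ with $W^D-W^0\le N U_w$; $\;N D+W^0-W^D\le N U_o$; $\;W^{d+u_w}-W^{d-1}\le N u_w$ for all $1\le d\le D-u_w$; $\;N\le W^{d+u_o}-W^{d-1}$ for all $1\le d\le D-u_o$; and $\;r_l^d\le W^d-W^{d-1}\le r_u^d$ for all $1\le d\le D$.
   Context: An instance of the Days On Days Off Scheduling Problem (DODOSP) consists of integers $D\ge 1$ (days), $N\ge 1$ (workers), bounds $l_w,u_w,l_o,u_o,U_w,U_o\in\mathbb{N}$, and for each day $d\in\{1,\dots,D\}$ integers $0\le r_l^d\le r_u^d\le N$. A schedule is a map $f:\{n_1,\dots,n_N\}\times\{1,\dots,D\}\to\{\mathrm{ON},\mathrm{OFF}\}$ (not cyclic). A work period (resp. off period) of a worker is an inclusion-wise maximal set of consecutive days on which the worker is ON (resp. OFF). A schedule is feasible if on every day $d$ the number of workers that are ON lies in $[r_l^d,r_u^d]$, every work period has length between $l_w$ and $u_w$, every off period has length between $l_o$ and $u_o$, every worker is ON on at most $U_w$ days and OFF on at most $U_o$ days. An instance is feasible if a feasible schedule exists. The UDODOSP is the DODOSP restricted to instances with $l_w=l_o=1$. *)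

(* Defs.v *)
From mathcomp Require Import all_boot all_order all_algebra.
Set Implicit Arguments. Unset Strict Implicit. Unset Printing Implicit Defensive.

(* A schedule is f : nat -> nat -> bool, f n d = true meaning worker n is ON
   on day d. Workers are 0 .. N-1, days are 1 .. D; other values of f are
   irrelevant. *)

(* Every maximal run (within days 1..D) of days on which g takes value v
   has length in [lo, hi]. *)
Definition periods_ok (g : nat -> bool) (D : nat) (v : bool) (lo hi : nat) : Prop :=
  forall a b : nat, 1 <= a -> a <= b -> b <= D ->
    (forall d, a <= d -> d <= b -> g d = v) ->
    (a == 1) || (g a.-1 != v) ->
    (b == D) || (g b.+1 != v) ->
    lo <= b - a + 1 <= hi.

Definition feasible_schedule (D N lw uw lo uo Uw Uo : nat) (rl ru : nat -> nat)
    (f : nat -> nat -> bool) : Prop :=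
  (forall d, 1 <= d -> d <= D -> rl d <= \sum_(i < N) (f i d : nat) <= ru d) /\
  (forall i, i < N ->
     [/\ periods_ok (f i) D true lw uw,
         periods_ok (f i) D false lo uo,
         \sum_(1 <= d < D.+1) (f i d : nat) <= Uw &
         \sum_(1 <= d < D.+1) (~~ f i d : nat) <= Uo]).

Definition dodosp_feasible (D N lw uw lo uo Uw Uo : nat) (rl ru : nat -> nat) : Prop :=
  exists f : nat -> nat -> bool, feasible_schedule D N lw uw lo uo Uw Uo rl ru f.

(* Main.v *)
Require Import Defs.
From mathcomp Require Import all_boot all_order all_algebra.
From mathcomp Require Import zify.
Import Order.TTheory GRing.Theory Num.Theory.

Section Helpers.
Local Open Scope nat_scope.

Lemma modsep (a b N : nat) : a < b -> a %% N = b %% N -> a + N <= b.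
Proof.
move=> lt e.
have : N %| b - a by rewrite -eqn_mod_dvd ?e // ltnW.
move/(dvdn_leq); rewrite subn_gt0 => /(_ lt). lia.
Qed.

Lemma iotaS p c : iota p c.+1 = iota p c ++ [:: p + c].
Proof. by rewrite -addn1 iotaD. Qed.

Lemma count1 p c N i : c <= N -> count (fun k => k %% N == i) (iota p c) <= 1.
Proof.
elim: c => [|c IH] hc //.
rewrite iotaS count_cat /=.
case: eqP => hi /=; last by rewrite !addn0 IH // ltnW.
suff -> : count (fun k => k %% N == i) (iota p c) = 0 by [].
apply/eqP; rewrite -leqn0 leqNgt -has_count; apply/hasPn => k.
rewrite mem_iota => /andP[h1 h2]; apply/negP => /eqP hk.
have := @modsep k (p+c) N h2 (etrans hk (esym hi)). lia.
Qed.

Lemma sum_eq1 N x : x < N -> \sum_(i < N) ((x == i) : nat) = 1.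
Proof.
move=> hx; rewrite (bigD1 (Ordinal hx)) //= eqxx big1 // => j hj.
case: eqP => // e; move: hj; suff -> : j = Ordinal hx by rewrite eqxx.
by apply: val_inj => /=.
Qed.

Lemma sumcount p c N : c <= N -> \sum_(i < N) count (fun k => k %% N == i) (iota p c) = c.
Proof.
elim: c => [|c IH] hc; first by rewrite big1.
rewrite (eq_bigr (fun i : 'I_N => count (fun k => k %% N == i) (iota p c) + ((p + c) %% N == i))); last first.
  by move=> i _; rewrite iotaS count_cat /= addn0.
rewrite big_split /= IH ?(ltnW hc) // sum_eq1 ?addn1 // ltn_pmod //; lia.
Qed.

Lemma countblock m N i : i < N -> count (fun k => k %% N == i) (iota 0 (m * N)) = m.
Proof.
move=> hi; elim: m => [|m IH]; first by rewrite mul0n.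
rewrite mulSnr iotaD count_cat IH add0n -[m * N]addn0 iotaDl count_map.
rewrite (@eq_in_count _ _ (pred1 i)); last first.
  move=> k; rewrite mem_iota add0n => /andP[_ hk] /=.
  by rewrite modnMDl modn_small.
by rewrite count_uniq_mem ?iota_uniq // mem_iota hi addn1.
Qed.

Lemma countmono p n1 n2 (a : pred nat) : n1 <= n2 -> count a (iota p n1) <= count a (iota p n2).
Proof. by move=> h; rewrite -(subnKC h) iotaD count_cat leq_addr. Qed.

Lemma haswit p n N i : i < N -> N <= n -> has (fun k => k %% N == i) (iota p n).
Proof.
move=> hi hn; apply/hasP; exists (p + (i + N - p %% N) %% N).
  rewrite mem_iota leq_addr /= ltn_add2l.
  by apply: leq_trans hn; rewrite ltn_pmod //; lia.
have hr : p %% N < N by rewrite ltn_pmod //; lia.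
rewrite {1}(divn_eq p N) -addnA modnMDl modnDmr.
have -> : p %% N + (i + N - p %% N) = i + N by lia.
by rewrite modnDr modn_small.
Qed.

Lemma sum_compl m n (b : nat -> bool) :
  \sum_(m <= e < n) (b e : nat) + \sum_(m <= e < n) (~~ b e : nat) = n - m.
Proof.
rewrite -big_split /= (eq_bigr (fun _ => 1)) ?sum_nat_const_nat ?muln1 //.
by move=> e _; case: (b e).
Qed.

Lemma sum_ge1 m n (b : nat -> bool) e : m <= e < n -> b e -> 1 <= \sum_(m <= e < n) (b e : nat).
Proof.
move=> /andP[h1 h2] be; rewrite (@big_cat_nat _ _ _ e) ?(ltnW h2) //= [\sum_(e <= i < n) _]big_ltn //= be; lia.
Qed.

Lemma extend_run (g : nat -> bool) D v : forall n a b, (a - 1) + (D - b) <= n -> 1 <= a -> a <= b -> b <= D ->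
  (forall d, a <= d -> d <= b -> g d = v) ->
  exists a' b', [/\ 1 <= a' <= a, b <= b' <= D, (forall d, a' <= d -> d <= b' -> g d = v),
     (a' == 1) || (g a'.-1 != v) & (b' == D) || (g b'.+1 != v)].
Proof.
elim=> [|n IH] a b hn ha hab hb hg.
  exists a, b; split => //; try lia; apply/orP; left; apply/eqP; lia.
case hA: ((a == 1) || (g a.-1 != v)).
  case hB: ((b == D) || (g b.+1 != v)).
    by exists a, b; split => //; lia.
  move/negbT: hB; rewrite negb_or negbK => /andP[hbD gb].
  have [a' [b' [h1 h2 h3 h4 h5]]] := IH a b.+1 ltac:(lia) ha ltac:(lia) ltac:(lia)
    ltac:(move=> d h h'; case: (ltngtP d b.+1) => // [hd|hd|->]; [apply: hg; lia|lia|exact/eqP]).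
  by exists a', b'; split => //; lia.
move/negbT: hA; rewrite negb_or negbK => /andP[haD ga].
have [a' [b' [h1 h2 h3 h4 h5]]] := IH a.-1 b ltac:(lia) ltac:(lia) ltac:(lia) hb
  ltac:(move=> d h h'; case: (ltngtP d a.-1) => // [hd|hd|->]; [lia|apply: hg; lia|exact/eqP]).
by exists a', b'; split => //; lia.
Qed.

Lemma periods_from_windows (g : nat -> bool) D v hi :
  (forall d, 1 <= d -> d + hi <= D -> exists e, d <= e <= d + hi /\ g e != v) ->
  periods_ok g D v 1 hi.
Proof.
move=> hw a b ha hab hb hg _ _; apply/andP; split; first by rewrite addn1.
rewrite leqNgt; apply/negP => hlt.
have [e [/andP[e1 e2] ge]] := hw a ha ltac:(lia).
by move: ge; rewrite hg ?eqxx //; lia.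
Qed.


Lemma sufficiency D N uw uo Uw Uo (c : nat -> nat) : 0 < N ->
  (forall d, 1 <= d -> d <= D -> c d <= N) ->
  let P := fun d => \sum_(1 <= e < d.+1) c e in
  P D <= N * Uw -> N * D <= P D + N * Uo ->
  (forall d, 1 <= d -> d <= D - uw -> P (d + uw) <= P d.-1 + N * uw) ->
  (forall d, 1 <= d -> d <= D - uo -> P d.-1 + N <= P (d + uo)) ->
  exists f : nat -> nat -> bool,
    (forall d, 1 <= d -> d <= D -> \sum_(i < N) (f i d : nat) = c d) /\
    (forall i, i < N -> [/\ periods_ok (f i) D true 1 uw, periods_ok (f i) D false 1 uo,
       \sum_(1 <= d < D.+1) (f i d : nat) <= Uw &
       \sum_(1 <= d < D.+1) (~~ f i d : nat) <= Uo]).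
Proof.
move=> N0 hc P hU hO hw ho.
have PS : forall d, P d.+1 = P d + c d.+1 by move=> d; rewrite /P big_nat_recr.
have P0 : P 0 = 0 by rewrite /P big_geq.
have Pmono : forall a b, a <= b -> P a <= P b.
  move=> a b /subnK <-; elim: (b - a) => [|k IH]; rewrite ?add0n // addSn PS; lia.
have Pd : forall d, 1 <= d -> P d = P d.-1 + c d by move=> [|d] //= _; rewrite PS.
pose a i := fun k => k %% N == i.
exists (fun i d => has (a i) (iota (P d.-1) (c d))).
have hasc : forall i d, 1 <= d -> d <= D ->
    (has (a i) (iota (P d.-1) (c d)) : nat) = count (a i) (iota (P d.-1) (c d)).
  move=> i d d1 d2; rewrite has_count.
  have := @count1 (P d.-1) (c d) N i (hc d d1 d2); case: count => [|[|]] //.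
split.
  move=> d d1 d2.
  rewrite (eq_bigr (fun i : 'I_N => count (a i) (iota (P d.-1) (c d)))); last first.
    by move=> i _; apply: hasc.
  exact: sumcount _ _ _ (hc d d1 d2).
move=> i hi.
have tot : forall n, n <= D ->
      \sum_(1 <= d < n.+1) (has (a i) (iota (P d.-1) (c d)) : nat) = count (a i) (iota 0 (P n)).
    elim=> [|n IH] hn; first by rewrite big_geq // P0.
    rewrite big_nat_recr //= IH ?(ltnW hn) // hasc // PS iotaD count_cat add0n //.
split.
- apply: periods_from_windows => d d1 dD.
  case hall: (all (fun e => has (a i) (iota (P e.-1) (c e))) (iota d uw.+1)); last first.
    move/negbT: hall => /allPn [e]; rewrite mem_iota => he hne; exists e; split; first lia.
    by move: hne; case: has.
  exfalso.
  have claim : forall j, j <= uw -> exists k, P d.-1 + j * N <= k < P (d + j) /\ k %% N = i.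
    elim=> [|j IHj] hj.
      have := allP hall d; rewrite mem_iota leqnn /= => /(_ ltac:(lia)) /hasP [k].
      rewrite mem_iota => hk /eqP hki; exists k; split => //.
      by rewrite mul0n !addn0 (Pd d d1).
    have [k [hk hki]] := IHj (ltnW hj).
    have := allP hall (d + j.+1); rewrite mem_iota => /(_ ltac:(lia)) /hasP [k'].
    have -> : (d + j.+1).-1 = d + j by lia.
    rewrite mem_iota => hk' /eqP hki'.
    have := @modsep k k' N ltac:(lia) (etrans hki (esym hki')).
    exists k'; split => //.
    have := Pd (d + j.+1) ltac:(lia); have -> : (d + j.+1).-1 = d + j by lia.
    rewrite mulSn; lia.
  have [k [hk _]] := claim uw (leqnn _).
  have := hw d d1 ltac:(lia). rewrite mulnC; lia.
- apply: periods_from_windows => d d1 dD.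
  case hall: (all (fun e => ~~ has (a i) (iota (P e.-1) (c e))) (iota d uo.+1)); last first.
    move/negbT: hall => /allPn [e]; rewrite mem_iota => he hne; exists e; split; first lia.
    by move: hne; case: has.
  exfalso.
  have claim : forall j, j <= uo.+1 -> ~~ has (a i) (iota (P d.-1) (P (d.-1 + j) - P d.-1)).
    elim=> [|j IHj] hj; first by rewrite addn0 subnn.
    have e1 : P (d.-1 + j.+1) - P d.-1 = (P (d.-1 + j) - P d.-1) + c (d + j).
      rewrite addnS PS; have -> : (d.-1 + j).+1 = d + j by lia.
      have := Pmono d.-1 (d.-1 + j) (leq_addr _ _); lia.
    rewrite e1 iotaD has_cat negb_or IHj ?(ltnW hj) //=.
    have e2 : P d.-1 + (P (d.-1 + j) - P d.-1) = P (d + j).-1.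
      have := Pmono d.-1 (d.-1 + j) (leq_addr _ _).
      have -> : (d + j).-1 = d.-1 + j by lia.
      lia.
    rewrite e2; apply: (allP hall (d + j)); rewrite mem_iota; lia.
  have := claim uo.+1 (leqnn _).
  have -> : d.-1 + uo.+1 = d + uo by lia.
  rewrite haswit //; have := ho d d1 ltac:(lia); lia.
- rewrite tot //; apply: leq_trans (countmono 0 (P D) (Uw * N) (a i) _) _.
  by rewrite mulnC.
  by rewrite countblock.
- have := sum_compl 1 D.+1 (fun d => has (a i) (iota (P d.-1) (c d))).
  rewrite tot // subSS subn0.
  have := countmono 0 ((D - Uo) * N) (P D) (a i).
  rewrite countblock //.
  have : (D - Uo) * N <= P D by rewrite mulnBl mulnC [Uo * N]mulnC; lia.
  move=> h /(_ h); lia.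
Qed.


Definition Tsum (f : nat -> nat -> bool) N d := \sum_(i < N) (f i d : nat).
Definition Ssum (f : nat -> nat -> bool) N d := \sum_(1 <= e < d.+1) Tsum f N e.

Lemma sumconst N c : \sum_(i < N) c = N * c.
Proof. by rewrite big_const_ord iter_addn_0 mulnC. Qed.

Lemma necessity D N uw uo Uw Uo rl ru f : feasible_schedule D N 1 uw 1 uo Uw Uo rl ru f ->
  [/\ Ssum f N D <= N * Uw, N * D <= Ssum f N D + N * Uo,
      (forall d, 1 <= d -> d <= D - uw -> Ssum f N (d + uw) <= Ssum f N d.-1 + N * uw),
      (forall d, 1 <= d -> d <= D - uo -> Ssum f N d.-1 + N <= Ssum f N (d + uo)) &
      (forall d, 1 <= d -> d <= D -> Ssum f N d = Ssum f N d.-1 + Tsum f N d /\ rl d <= Tsum f N d <= ru d)].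
Proof.
move=> [hday hwork].
have ex : forall m n, \sum_(m <= e < n) Tsum f N e = \sum_(i < N) \sum_(m <= e < n) (f i e : nat).
  by move=> m n; rewrite /Tsum exchange_big.
have Sd : forall d, 1 <= d -> Ssum f N d = Ssum f N d.-1 + Tsum f N d.
  by move=> [|d] // _; rewrite /Ssum big_nat_recr.
have Swin : forall d k, 1 <= d -> Ssum f N (d + k) = Ssum f N d.-1 + \sum_(d <= e < (d + k).+1) Tsum f N e.
  move=> [|d] k // _; rewrite /Ssum /= (@big_cat_nat _ _ _ d.+1) //.
  lia.
split.
- rewrite /Ssum ex; apply: (@leq_trans (\sum_(i < N) Uw)); last by rewrite sumconst.
  by apply: leq_sum => i _; case: (hwork i (ltn_ord i)).
- have : \sum_(i < N) (\sum_(1 <= e < D.+1) (f i e : nat) + \sum_(1 <= e < D.+1) (~~ f i e : nat)) = N * D.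
    by rewrite (eq_bigr (fun _ => D)) ?sumconst // => i _; rewrite sum_compl subSS subn0.
  rewrite big_split /= -ex => <-; rewrite /Ssum leq_add2l.
  apply: (@leq_trans (\sum_(i < N) Uo)); last by rewrite sumconst.
  by apply: leq_sum => i _; case: (hwork i (ltn_ord i)).
- move=> d d1 dw; rewrite Swin // leq_add2l ex.
  apply: (@leq_trans (\sum_(i < N) uw)); last by rewrite sumconst.
  apply: leq_sum => i _; have [hon _ _ _] := hwork i (ltn_ord i).
  case hall: (all (f i) (iota d uw.+1)).
    exfalso.
    have [a' [b' [h1 h2 h3 h4 h5]]] := @extend_run (f i) D true D d (d + uw) ltac:(lia) d1 (leq_addr _ _) ltac:(lia)
      (fun e he1 he2 => allP hall e ltac:(rewrite mem_iota; lia)).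
    have := hon a' b' ltac:(lia) ltac:(lia) ltac:(lia) h3 h4 h5; lia.
  move/negbT: hall => /allPn [e]; rewrite mem_iota => he hne.
  have := sum_compl d (d + uw).+1 (f i).
  have := @sum_ge1 d (d + uw).+1 (fun e => ~~ f i e) e ltac:(lia) hne.
  lia.
- move=> d d1 dw; rewrite Swin // leq_add2l ex.
  apply: (@leq_trans (\sum_(i < N) 1)); first by rewrite sumconst muln1.
  apply: leq_sum => i _; have [_ hoff _ _] := hwork i (ltn_ord i).
  case hall: (all (fun e => ~~ f i e) (iota d uo.+1)).
    exfalso.
    have [a' [b' [h1 h2 h3 h4 h5]]] := @extend_run (f i) D false D d (d + uo) ltac:(lia) d1 (leq_addr _ _) ltac:(lia)
      (fun e he1 he2 => negbTE (allP hall e ltac:(rewrite mem_iota; lia))).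
    have := hoff a' b' ltac:(lia) ltac:(lia) ltac:(lia) h3 h4 h5; lia.
  move/negbT: hall => /allPn [e]; rewrite mem_iota negbK => he hne.
  exact: (@sum_ge1 d (d + uo).+1 (f i) e ltac:(lia) hne).
- move=> d d1 dD; split; [exact: Sd | exact: hday].
Qed.

End Helpers.

Local Open Scope ring_scope.

Theorem corollary4p8 (D N uw uo Uw Uo : nat) (rl ru : nat -> nat) :
  (1 <= D)%N -> (1 <= N)%N ->
  (forall d, (1 <= d)%N -> (d <= D)%N -> (rl d <= ru d)%N /\ (ru d <= N)%N) ->
  dodosp_feasible D N 1 uw 1 uo Uw Uo rl ru <->
  exists W : nat -> int,
    [/\ W D - W 0%N <= (N * Uw)%:Z,
        (N * D)%:Z + W 0%N - W D <= (N * Uo)%:Z,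
        (forall d, (1 <= d)%N -> (d <= D - uw)%N -> W (d + uw)%N - W d.-1 <= (N * uw)%:Z),
        (forall d, (1 <= d)%N -> (d <= D - uo)%N -> N%:Z <= W (d + uo)%N - W d.-1) &
        (forall d, (1 <= d)%N -> (d <= D)%N ->
           (rl d)%:Z <= W d - W d.-1 /\ W d - W d.-1 <= (ru d)%:Z)].
Proof.
move=> hD hN hr; split.
  move=> [f hf]; have [h1 h2 h3 h4 h5] := @necessity D N uw uo Uw Uo rl ru f hf.
  have S0 : Ssum f N 0 = 0%N by rewrite /Ssum big_geq.
  exists (fun d => (Ssum f N d)%:Z); split.
  - lia.
  - lia.
  - move=> d d1 dd; have := h3 d d1 dd; lia.
  - move=> d d1 dd; have := h4 d d1 dd; lia.
  - move=> d d1 dD; have [e1 /andP[e2 e3]] := h5 d d1 dD; split; lia.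
move=> [W [h1 h2 h3 h4 h5]].
pose c := fun d => absz (W d - W d.-1).
have hc1 : forall d, (1 <= d)%N -> (d <= D)%N -> (c d)%:Z = W d - W d.-1.
  by move=> d d1 dD; have [h _] := h5 d d1 dD; rewrite /c; lia.
have hP : forall d, (d <= D)%N -> (\sum_(1 <= e < d.+1) c e)%N%:Z = W d - W 0%N.
  elim=> [|d IH] hd; first by rewrite big_geq //; lia.
  have h := hc1 d.+1 isT hd; simpl in h.
  rewrite big_nat_recr //=; have := IH (ltnW hd); lia.
have hcN : forall d, (1 <= d)%N -> (d <= D)%N -> (c d <= N)%N.
  move=> d d1 dD; have := hc1 d d1 dD; have := h5 d d1 dD; have := hr d d1 dD; lia.
have hU : (\sum_(1 <= e < D.+1) c e <= N * Uw)%N by have := hP D (leqnn _); lia.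
have hO : (N * D <= \sum_(1 <= e < D.+1) c e + N * Uo)%N by have := hP D (leqnn _); lia.
have hw : forall d, (1 <= d)%N -> (d <= D - uw)%N ->
    (\sum_(1 <= e < (d + uw).+1) c e <= \sum_(1 <= e < d.-1.+1) c e + N * uw)%N.
  move=> d d1 dd; have := h3 d d1 dd; have := hP (d + uw)%N ltac:(lia); have := hP d.-1 ltac:(lia); lia.
have ho : forall d, (1 <= d)%N -> (d <= D - uo)%N ->
    (\sum_(1 <= e < d.-1.+1) c e + N <= \sum_(1 <= e < (d + uo).+1) c e)%N.
  move=> d d1 dd; have := h4 d d1 dd; have := hP (d + uo)%N ltac:(lia); have := hP d.-1 ltac:(lia); lia.
have [f [hf1 hf2]] := @sufficiency D N uw uo Uw Uo c hN hcN hU hO hw ho.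
exists f; split => //.
move=> d d1 dD; rewrite hf1 //; have := hc1 d d1 dD; have := h5 d d1 dD.
move=> [e1 e2] e3; apply/andP; split; lia.
Qed.
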